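(* Let $d>1$, $e\geq 1$, $n\geq 1$. A basis of $H^\bullet(\Gamma(de,e,n);\mathbb{Q})$ is naturally indexed by the orbits, under the action of $W=G(de,e,n)$, of the set of invariant $de$-multigraphs with loops on $n$ vertices: for each orbit with representative $\Delta$, the class $\sum_{w\in W}w(\omega_\Delta)$ is nonzero, and these classes form a basis, the class of $\Delta$ having degree equal to the number of edges plus loops of $\Delta$.
   Context: For a finite complex reflection group $W$ with hyperplane set $\mathcal A$, $P=\pi_1(\mathbb{C}^\ell\setminus\bigcup\mathcal A)$, $B=\pi_1((\mathbb{C}^\ell\setminus\bigcup\mathcal A)/W)$, $\Gamma=B/[P,P]$; then $H^\bullet(\Gamma;\mathbb{Q})\cong\Lambda^\bullet(\mathbb{Q}\mathcal A)^W$, where the degree-one part has basis the forms $d\log$ of the hyperplanes' linear forms, permuted by $W$. $G(de,e,n)$ is the group of $n\times n$ monomial matrices with nonzero entries in $\mu_{de}$ whose product is a $d$-th root of unity; $\Gamma(de,e,n)$ is $\Gamma$ for it. Its hyperplanes are $z_i=\zeta z_j$ ($i<j$, $\zeta\in\mu_{de}$) and $z_i=0$. $\tilde K_n(de)$ is the multigraph on $\{1,\dots,n\}$ with $de$ edges between each pair $i<j$, labelled by $\mu_{de}$, and one unlabelled loop at each vertex; a $de$-multigraph with loops on $n$ vertices is a subgraph of $\tilde K_n(de)$ (subset of edges and loops). The edge $(i,j,\zeta)$ corresponds to $d\log(z_i-\zeta z_j)$, the loop at $i$ to $d\log(z_i)$, and $\Delta$ to the wedge product $\omega_\Delta$ of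 these forms, edges first in lexicographic order of $(i,j,\zeta)$ (for a fixed order of $\mu_{de}$), then loops. $W$ acts on such multigraphs through its action on hyperplanes. $\mathrm{Stab}_W(\Delta)$ is the subgroup of $W$ preserving $\Delta$; $\Delta$ is invariant if every element of $\mathrm{Stab}_W(\Delta)$ induces an even permutation of the set of edges and loops of $\Delta$. *)

(* Defs.v *)
From HB Require Import structures.
From mathcomp Require Import all_boot all_order all_algebra all_fingroup.
Set Implicit Arguments.
Unset Strict Implicit.
Unset Printing Implicit Defensive.
Import GRing.Theory Num.Theory.

(* Hyperplanes of G(de,e,n), with m = de and zeta = exp(2 i pi / m):
   inl (p, k) with p = (i,j), i < j : the hyperplane  z_i = zeta^k z_j
                                       (edge (i,j,zeta^k) of K~_n(de));
   inr i                              : the hyperplane  z_i = 0 (loop at i). *)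
Notation Hyp n m :=
  ((({p : 'I_n * 'I_n | p.1 < p.2}) * 'I_m) + 'I_n)%type.

(* x mod m, as an element of 'I_m (m > 0 is witnessed by k0). *)
Definition modI (m : nat) (k0 : 'I_m) (x : nat) : 'I_m :=
  Ordinal (ltn_pmod x (leq_ltn_trans (leq0n k0) (ltn_ord k0))).

(* The hyperplane z_x = zeta^k z_y for x <> y, normalised so that the smaller
   index comes first (z_y = zeta^{-k} z_x when y < x).  The fallback [inr x]
   is only reached when x = y, which never happens below. *)
Definition edgeA (n m : nat) (x y : 'I_n) (k : 'I_m) : Hyp n m :=
  if x < y then
    match (insub (x, y) : option {p : 'I_n * 'I_n | p.1 < p.2}) with
    | Some p => inl (p, k) | None => inr x end
  else
    match (insub (y, x) : option {p : 'I_n * 'I_n | p.1 < p.2}) with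
    | Some p => inl (p, modI k (m - k)) | None => inr x end.

(* An element (s, a) stands for the monomial matrix sending the basis vector
   e_j to zeta^(a j) e_(s j), i.e. (w z)_(s j) = zeta^(a j) z_j. *)
Definition Welt (n m : nat) := ({perm 'I_n} * {ffun 'I_n -> 'I_m})%type.

(* G(de,e,n): the product of the nonzero entries, zeta^(sum a), is a d-th
   root of unity iff de | d * sum a iff e | sum a. *)
Definition Wset (n d e : nat) : {set Welt n (d * e)} :=
  [set w : Welt n (d * e) | e %| \sum_(i < n) (w.2 i : nat)].

(* Action of w on hyperplanes: H |-> w(H).
   z_i = 0  maps to  y_(s i) = 0;
   z_i = zeta^k z_j  maps to  y_(s i) = zeta^(k + a i - a j) y_(s j). *)
Definition actA (n m : nat) (w : Welt n m) (H : Hyp n m) : Hyp n m :=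
  match H with
  | inr i => inr (w.1 i)
  | inl (p, k) =>
      let i := (sval p).1 in let j := (sval p).2 in
      edgeA (w.1 i) (w.1 j) (modI k (k + w.2 i + (m - w.2 j)))
  end.

(* Total order on hyperplanes: edges in lexicographic order of (i,j,k)
   (mu_m ordered by exponent k), then loops (ordered by vertex). *)
Definition key (n m : nat) (H : Hyp n m) : nat :=
  match H with
  | inl (p, k) => ((sval p).1 * n + (sval p).2) * m + k
  | inr i => n * n * m + i
  end.

Definition inv (s : seq nat) : nat :=
  \sum_(p < size s) \sum_(q < size s) ((p < q) && (nth 0 s q < nth 0 s p)).

Definition sortA (n m : nat) (S : {set Hyp n m}) : seq (Hyp n m) :=
  sort (fun x y => key x <= key y) (enum S).

(* Exterior algebra Lambda^.(Q A): basis the monomials e_S (S a subset of A,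
   wedge of its elements in increasing order); an element is its coordinate
   function on this basis. *)
Definition Lam (n m : nat) := {ffun {set Hyp n m} -> rat}.

Definition wedge (n m : nat) (s : seq (Hyp n m)) : Lam n m :=
  [ffun T => if uniq s && (T == [set x in s])
             then ((-1) ^+ inv (map (@key n m) s))%R else 0%R].

Definition omega (n m : nat) (D : {set Hyp n m}) : Lam n m := wedge (sortA D).

Definition actL (n m : nat) (w : Welt n m) (f : Lam n m) : Lam n m :=
  [ffun T => (\sum_(S : {set Hyp n m}) f S * wedge (map (actA w) (sortA S)) T)%R].

(* Delta is invariant: each w in Stab_W(Delta) induces an even permutation of
   the edges and loops of Delta (parity = parity of the number of inversions). *)
Definition invariantG (n d e : nat) (D : {set Hyp n (d * e)}) : bool :=
  [forall w in Wset n d e,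
     (actA w @: D == D) ==> ~~ odd (inv (map (@key _ _) (map (actA w) (sortA D))))].

Definition cls (n d e : nat) (D : {set Hyp n (d * e)}) : Lam n (d * e) :=
  [ffun T => (\sum_(w in Wset n d e) actL w (omega D) T)%R].

(* Main.v *)
Require Import Defs.
From HB Require Import structures.
From mathcomp Require Import all_boot all_order all_algebra all_fingroup.
From mathcomp Require Import ring lra.
Import GRing.Theory Num.Theory.
Set Implicit Arguments. Unset Strict Implicit. Unset Printing Implicit Defensive.


Section Aux.
Variables n m : nat.
Hypothesis hm : 1 < m.
Local Notation Hy := (Hyp n m).

Lemma modZ (x y : nat) : ((x%:R : 'Z_m) = y%:R)%R -> x %% m = y %% m.
Proof. by move=> E; rewrite -!(val_Zp_nat hm) E. Qed.

Lemma ZmE x : ((x %% m)%:R : 'Z_m)%R = x%:R%R.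
Proof. exact: Zp_nat_mod. Qed.

Lemma Zm0 : (m%:R : 'Z_m)%R = 0%R.
Proof. by rewrite -ZmE modnn. Qed.

Lemma natrBm (t : 'I_m) : ((m - t)%:R : 'Z_m)%R = (- t%:R)%R.
Proof. by rewrite natrB ?Zm0 ?sub0r // ltnW. Qed.

Lemma natrBmod t : ((m - t %% m)%:R : 'Z_m)%R = (- t%:R)%R.
Proof. by rewrite natrB ?Zm0 ?sub0r ?ZmE // ltnW // ltn_pmod // ltnW. Qed.

Ltac zsimp := rewrite ?(natrD, natrBm, natrBmod, ZmE, Zm0).

Lemma modI_eq (k0 k1 : 'I_m) x y : x %% m = y %% m -> modI k0 x = modI k1 y.
Proof. by move=> E; apply: val_inj. Qed.

Lemma edgeA_lt (x y : 'I_n) (k : 'I_m) (h : x < y) :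
  edgeA x y k = inl (exist (fun p : 'I_n * 'I_n => p.1 < p.2) (x, y) h, k).
Proof.
rewrite /edgeA h.
by rewrite (@insubT _ (fun p : 'I_n * 'I_n => p.1 < p.2) _ (x, y) h).
Qed.

Lemma edgeA_swap (x y : 'I_n) (k : 'I_m) : x != y ->
  edgeA x y k = edgeA y x (modI k (m - k)).
Proof.
move=> xy; case: (ltngtP x y) => [h|h|/val_inj E]; last by rewrite E eqxx in xy.
- rewrite edgeA_lt /edgeA ltnNge (ltnW h) /=.
  rewrite (@insubT _ (fun p : 'I_n * 'I_n => p.1 < p.2) _ (x, y) h); congr (inl (_, _)).
  apply: val_inj => /=; rewrite -{1}(modn_small (ltn_ord k)); apply: modZ.
  have hk := ltn_ord k.
  rewrite natrB; last by rewrite ltnW // ltn_pmod // ltnW.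
  rewrite ZmE natrB; last by rewrite ltnW.
  by rewrite opprB addrC subrK.
- by rewrite [RHS]edgeA_lt /edgeA ltnNge (ltnW h) /= (@insubT _ (fun p : 'I_n * 'I_n => p.1 < p.2) _ (y, x) h).
Qed.

Lemma actA_edge (w : Welt n m) (x y : 'I_n) (k : 'I_m) : x != y ->
  actA w (edgeA x y k) = edgeA (w.1 x) (w.1 y) (modI k (k + w.2 x + (m - w.2 y))).
Proof.
move=> xy; case: (ltngtP x y) => [h|h|/val_inj E]; last by rewrite E eqxx in xy.
- by rewrite edgeA_lt.
- rewrite edgeA_swap // edgeA_lt /=.
  have sxy : w.1 x != w.1 y by rewrite (inj_eq perm_inj).
  rewrite [RHS]edgeA_swap //; congr edgeA; apply: modI_eq.
  apply: modZ; zsimp; ring.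
Qed.

Definition mulW (u w : Welt n m) : Welt n m :=
  (w.1 * u.1, [ffun j => modI (w.2 j) (u.2 (w.1 j) + w.2 j)])%g.

Lemma actA_mul (u w : Welt n m) (h : Hy) : @actA n m (mulW u w) h = actA u (actA w h).
Proof.
case: h => [[[[i j] /= hij] k]|i] /=; last by rewrite permM.
have ij : i != j by rewrite neq_ltn hij.
rewrite actA_edge ?(inj_eq perm_inj) //= !permM !ffunE; congr edgeA; apply: modI_eq.
apply: modZ; zsimp; ring.
Qed.


Definition idW : Welt n m := (1%g, [ffun _ => Ordinal (ltnW hm)]).

Lemma actA_id (h : Hy) : @actA n m idW h = h.
Proof.
case: h => [[[[i j] /= hij] k]|i] /=; last by rewrite perm1.
rewrite !perm1 edgeA_lt; congr (inl (_, _)); apply: val_inj => /=.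
by rewrite !ffunE /= addn0 subn0 modnDr modn_small.
Qed.

Definition invW (w : Welt n m) : Welt n m :=
  ((w.1)^-1, [ffun j => modI (w.2 j) (m - w.2 ((w.1)^-1 j))])%g.

Lemma mulVW (w : Welt n m) : mulW (invW w) w = idW.
Proof.
rewrite /mulW /idW /= mulgV; congr pair; apply/ffunP => j; rewrite !ffunE.
apply: val_inj => /=; rewrite permK -(mod0n m).
apply: modZ; zsimp; ring.
Qed.

Lemma actA_inv (w : Welt n m) h : @actA n m (invW w) (actA w h) = h.
Proof. by rewrite -actA_mul mulVW actA_id. Qed.

Lemma actA_inj (w : Welt n m) : injective (@actA n m w).
Proof. exact: can_inj (actA_inv w). Qed.

Lemma mulW_inj (u : Welt n m) : injective (mulW u).
Proof.
case=> [s a] [s' b]; rewrite /mulW /= => [[E1 E2]].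
have ss : s = s' by apply: (mulIg u.1).
subst s'; congr pair; apply/ffunP => j.
have := congr1 (fun f : {ffun 'I_n -> 'I_m} => (f j : nat)) E2; rewrite !ffunE /=.
move/eqP; rewrite eqn_modDl !modn_small // => /eqP E; exact: val_inj.
Qed.

End Aux.

Lemma mulW_in n d e (u w : Welt n (d * e)) : u \in Wset n d e -> w \in Wset n d e ->
  mulW u w \in Wset n d e.
Proof.
rewrite !inE => hu hw.
have em : e %| d * e by apply: dvdn_mull.
set X := fun j => (u.2 (w.1 j) + w.2 j).
have -> : \sum_(j < n) ((mulW u w).2 j : nat) = \sum_(j < n) (X j %% (d * e)).
  by apply: eq_bigr => j _; rewrite /mulW /= ffunE.
have E : \sum_(j < n) X j = \sum_(j < n) (X j %/ (d * e)) * (d * e) + \sum_(j < n) (X j %% (d * e)).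
  rewrite -big_split /=; apply: eq_bigr => j _; exact: divn_eq.
have hX : e %| \sum_(j < n) X j.
  rewrite /X big_split /= dvdn_addl //.
  by move: hu; rewrite (reindex_inj (@perm_inj _ w.1)).
by move: hX; rewrite E dvdn_addr // -big_distrl /= dvdn_mull.
Qed.


Section Sign.
Variable T : eqType.
Variable k : T -> nat.
Hypothesis k_inj : injective k.
Variable x0 : T.
Local Notation leK := (fun x y : T => k x <= k y).

Lemma inv_elem (h : T -> nat) (t : seq T) : uniq t ->
  Defs.inv (map h t) = \sum_(x <- t) \sum_(y <- t) ((index x t < index y t) && (h y < h x)).
Proof.
move=> ut; rewrite /Defs.inv size_map (big_nth x0) big_mkord; apply: eq_bigr => p _.
rewrite (big_nth x0) big_mkord; apply: eq_bigr => q _.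
by rewrite !index_uniq // !(nth_map x0).
Qed.

Lemma sort_index (t : seq T) x y : x \in t -> y \in t -> x != y ->
  (index x (sort leK t) < index y (sort leK t)) = (k x < k y).
Proof.
move=> xt yt xy; set s := sort leK t.
have xs : x \in s by rewrite mem_sort.
have ys : y \in s by rewrite mem_sort.
have ss : sorted leK s by apply: sort_sorted => a b; apply: leq_total.
have tr : transitive leK by move=> a b c /= h1 h2; apply: leq_trans h1 h2.
have rf : reflexive leK by move=> a /=.
have kxy : k x != k y by rewrite (inj_eq k_inj).
have H := sorted_leq_nth tr rf x0 ss.
have ix : index x s \in [pred i | i < size s] by rewrite inE index_mem.
have iy : index y s \in [pred i | i < size s] by rewrite inE index_mem.
case: (ltngtP (index x s) (index y s)) => hi.
- have := H _ _ ix iy (ltnW hi); rewrite /= !nth_index // leq_eqVlt.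
  by rewrite (negbTE kxy).
- have := H _ _ iy ix (ltnW hi); rewrite /= !nth_index // => hk.
  by apply/esym/negbTE; rewrite -leqNgt.
- by move: (congr1 (nth x0 s) hi); rewrite !nth_index // => E; rewrite E eqxx in xy.
Qed.

Lemma inv_sort (t : seq T) : uniq t -> Defs.inv (map k (sort leK t)) = 0.
Proof.
move=> ut; rewrite inv_elem ?sort_uniq //.
rewrite big_seq big1 // => x xs; rewrite big_seq big1 // => y ys.
rewrite mem_sort in xs; rewrite mem_sort in ys.
case: (eqVneq x y) => [->|xy]; first by rewrite ltnn.
by rewrite sort_index //; case: ltngtP.
Qed.

Lemma sum_even (t : seq T) (F : T -> T -> nat) :
  (forall x, F x x = 0) ->
  (forall x y, x \in t -> y \in t -> x != y -> ~~ odd (F x y + F y x)) ->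
  ~~ odd (\sum_(x <- t) \sum_(y <- t) F x y).
Proof.
move=> F0 Fe.
have E : \sum_(x <- t) \sum_(y <- t) F x y =
  \sum_(x <- t) \sum_(y <- t) ((k x < k y) * F x y) + \sum_(x <- t) \sum_(y <- t) ((k y < k x) * F x y).
  rewrite -big_split; apply: eq_bigr => x _; rewrite -big_split; apply: eq_bigr => y _ /=.
  case: (eqVneq x y) => [->|xy]; first by rewrite F0 !muln0.
  have : k x != k y by rewrite (inj_eq k_inj).
  by case: ltngtP => //= _ _; rewrite ?mul1n ?mul0n ?addn0.
rewrite E [X in _ + X]exchange_big /= -big_split /=.
rewrite big_seq; apply: (big_ind (fun a => ~~ odd a)) => //.
  by move=> a b; rewrite oddD => /negbTE -> /negbTE ->.
move=> x xt; rewrite -big_split big_seq; apply: (big_ind (fun a => ~~ odd a)) => //.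
  by move=> a b; rewrite oddD => /negbTE -> /negbTE ->.
move=> y yt /=; rewrite -mulnDr oddM negb_and.
case: (eqVneq x y) => [->|xy]; first by rewrite ltnn.
by rewrite Fe ?orbT.
Qed.

Lemma bool3 (a b c : bool) :
  ~~ odd ((a && c) + (a && ~~ b) + (b && c) + ((~~ a && ~~ c) + (~~ a && b) + (~~ b && ~~ c))).
Proof. by case: a; case: b; case: c. Qed.

Lemma sign_main (g : T -> T) (t : seq T) : injective g -> uniq t ->
  odd (Defs.inv (map k (map g t))) =
  odd (Defs.inv (map k t)) (+) odd (Defs.inv (map k (map g (sort leK t)))).
Proof.
move=> g_inj ut.
rewrite -!map_comp !inv_elem ?sort_uniq //.
have P := permEl (perm_sort leK t).
set A3 := \sum_(x <- sort leK t) _.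
have -> : A3 = \sum_(x <- t) \sum_(y <- t) ((k x < k y) && ((k \o g) y < (k \o g) x)).
  rewrite /A3 (perm_big _ P); apply: eq_big_seq => x xt.
  rewrite (perm_big _ P); apply: eq_big_seq => y yt.
  case: (eqVneq x y) => [->|xy]; first by rewrite !ltnn.
  by rewrite sort_index.
set A1 := \sum_(x <- t) _; set A2 := \sum_(x <- t) _; set A4 := \sum_(x <- t) _.
suff : ~~ odd (A1 + A2 + A4).
  by rewrite !oddD; case: (odd A1); case: (odd A2); case: (odd A4).
rewrite /A1 /A2 /A4 -!big_split /=.
under eq_bigr do rewrite -!big_split /=.
apply: sum_even => [x|x y xt yt xy]; first by rewrite !ltnn.
have h1 : (index y t < index x t) = ~~ (index x t < index y t).
  case: ltngtP => // E; move: (congr1 (nth x0 t) E); rewrite !nth_index // => E'.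
  by rewrite E' eqxx in xy.
have h2 : (k y < k x) = ~~ (k x < k y).
  have : k x != k y by rewrite (inj_eq k_inj).
  by case: ltngtP.
have h3 : ((k \o g) x < (k \o g) y) = ~~ ((k \o g) y < (k \o g) x).
  have : (k \o g) x != (k \o g) y by rewrite /= (inj_eq k_inj) (inj_eq g_inj).
  by case: ltngtP.
rewrite h1 h2 h3; exact: bool3.
Qed.
End Sign.


Lemma key_aux a r a' r' m : r < m -> r' < m -> a * m + r = a' * m + r' -> a = a' /\ r = r'.
Proof.
move=> hr hr' E.
have m0 : 0 < m by apply: leq_ltn_trans hr.
have E1 := congr1 (modn^~ m) E; rewrite /= !modnMDl !modn_small // in E1.
subst r'; split => //; move/eqP: E; rewrite eqn_add2r eqn_mul2r.
by case/orP => [/eqP m00|/eqP //]; rewrite m00 in m0.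
Qed.

Lemma key_inj n m : injective (@key n m).
Proof.
have bnd : forall (p : {p : 'I_n * 'I_n | p.1 < p.2}) (k : 'I_m),
    ((sval p).1 * n + (sval p).2) * m + k < n * n * m.
  move=> [[i j] /= _] k.
  have hi := ltn_ord i; have hj := ltn_ord j; have hk := ltn_ord k.
  have h1 : i * n + j < n * n.
    apply: (@leq_trans (i * n + n)); first by rewrite ltn_add2l.
    by rewrite addnC -mulSn leq_mul2r hi orbT.
  apply: (@leq_trans ((i * n + j) * m + m)); first by rewrite ltn_add2l.
  by rewrite addnC -mulSn leq_mul2r h1 orbT.
case=> [[p k]|i] [[p' k']|i'] /= E.
- have [E1 E2] := key_aux (ltn_ord k) (ltn_ord k') E.
  have [E3 E4] := key_aux (ltn_ord (sval p).2) (ltn_ord (sval p').2) E1.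
  have kk : k = k' by apply: val_inj.
  have pp : p = p'.
    apply: val_inj; move: p p' E3 E4 {E E1 bnd} => [[i j] /= _] [[i' j'] /= _] E3 E4.
    by congr pair; apply: val_inj.
  by rewrite pp kk.
- have := bnd p k; rewrite E ltnNge leq_addr //.
- have := bnd p' k'; rewrite -E ltnNge leq_addr //.
- by congr inr; apply: val_inj; move/eqP: E; rewrite eqn_add2l => /eqP.
Qed.

Section Main.
Variables n d e : nat.
Hypothesis hm : 1 < d * e.
Hypothesis hn : 0 < n.
Local Notation m := (d * e).
Local Notation Hy := (Hyp n m).
Definition x0 : Hy := inr (Ordinal hn).
Local Notation W := (Wset n d e).
Local Notation leK := (fun x y : Hy => key x <= key y).

Definition eps (w : Welt n m) (S : {set Hy}) : rat :=
  ((-1) ^+ Defs.inv (map (@key n m) (map (actA w) (sortA S))))%R.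

Lemma sortA_uniq (S : {set Hy}) : uniq (sortA S).
Proof. by rewrite sort_uniq enum_uniq. Qed.

Lemma mem_sortA (S : {set Hy}) x : (x \in sortA S) = (x \in S).
Proof. by rewrite mem_sort mem_enum. Qed.

Lemma set_map (w : Welt n m) (S : {set Hy}) :
  [set x in map (actA w) (sortA S)] = actA w @: S.
Proof.
apply/setP => x; rewrite inE; apply/mapP/imsetP => [[y]|[y]].
  by rewrite mem_sortA => yS ->; exists y.
by move=> yS ->; exists y; rewrite ?mem_sortA.
Qed.

Lemma wedge_map (w : Welt n m) (S T : {set Hy}) :
  wedge (map (actA w) (sortA S)) T = if T == actA w @: S then eps w S else 0%R.
Proof.
rewrite /wedge ffunE (map_inj_uniq (@actA_inj n m hm w)) sortA_uniq set_map /=.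
by [].
Qed.

Lemma omegaE (D S : {set Hy}) : omega D S = if S == D then 1%R else 0%R.
Proof.
rewrite /omega /wedge ffunE sortA_uniq /=.
have -> : [set x in sortA D] = D by apply/setP => x; rewrite inE mem_sortA.
by rewrite /sortA (inv_sort (@key_inj n m) x0) ?enum_uniq.
Qed.

Lemma actLE (w : Welt n m) (f : Lam n m) T :
  actL w f T = (\sum_S f S * (if T == actA w @: S then eps w S else 0))%R.
Proof. by rewrite ffunE; apply: eq_bigr => S _; rewrite wedge_map. Qed.

Lemma collapse (X : {set Hy}) (a : rat) (F : {set Hy} -> rat) :
  (\sum_S (if S == X then a else 0) * F S = a * F X)%R.
Proof.
rewrite (bigD1 X) //= eqxx big1 ?addr0 // => S /negbTE ->; exact: mul0r.
Qed.

Lemma collapse' (X : {set Hy}) (a : rat) (F : {set Hy} -> rat) :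
  (\sum_S F S * (if X == S then a else 0) = F X * a)%R.
Proof.
rewrite (bigD1 X) //= eqxx big1 ?addr0 // => S; rewrite eq_sym => /negbTE ->; exact: mulr0.
Qed.

Lemma actL_img (w : Welt n m) (f : Lam n m) (S : {set Hy}) :
  actL w f (actA w @: S) = (f S * eps w S)%R.
Proof.
rewrite actLE (bigD1 S) //= eqxx big1 ?addr0 // => S' nS.
case: eqP => [E|_]; last exact: mulr0.
by move: nS; rewrite (imset_inj (@actA_inj n m hm w) E) eqxx.
Qed.

Lemma clsE (D T : {set Hy}) :
  cls D T = (\sum_(w in W) (if T == actA w @: D then eps w D else 0))%R.
Proof.
rewrite ffunE; apply: eq_bigr => w _; rewrite actLE.
under eq_bigr do rewrite omegaE.
by rewrite collapse mul1r.
Qed.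

Lemma eps_inv (D : {set Hy}) (w : Welt n m) : invariantG D -> w \in W ->
  actA w @: D = D -> eps w D = 1%R.
Proof.
move=> /forallP /(_ w) /implyP hD wW E; have := hD wW.
rewrite E eqxx /= => hodd.
by rewrite /eps -signr_odd (negbTE hodd).
Qed.

Lemma imset_mul (u w : Welt n m) (D : {set Hy}) :
  actA (mulW u w) @: D = actA u @: (actA w @: D).
Proof. by rewrite -imset_comp; apply: eq_imset => h; rewrite /= actA_mul. Qed.

Lemma eps_mul (u w : Welt n m) (D : {set Hy}) :
  eps (mulW u w) D = (eps w D * eps u (actA w @: D))%R.
Proof.
rewrite /eps.
have -> : map (actA (mulW u w)) (sortA D) = map (actA u) (map (actA w) (sortA D)).
  by rewrite -map_comp; apply: eq_map => h; rewrite /= actA_mul.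
set t := map (actA w) (sortA D).
have ut : uniq t by rewrite (map_inj_uniq (@actA_inj n m hm w)) sortA_uniq.
have S := sign_main (@key_inj n m) x0 (@actA_inj n m hm u) ut.
rewrite -signr_odd S signr_addb.
rewrite !signr_odd.
suff -> : sort leK t = sortA (actA w @: D) by [].
rewrite /sortA; apply/perm_sort_inP.
- by move=> a b _ _; apply: leq_total.
- by move=> a b c _ _ _; apply: leq_trans.
- by move=> a b _ _ /andP [h1 h2]; apply: (@key_inj n m); apply/eqP; rewrite eqn_leq h1 h2.
apply: uniq_perm => //; first exact: enum_uniq.
by move=> x; rewrite mem_enum -set_map inE.
Qed.

Lemma idW_in : @idW n m hm \in W.
Proof. by rewrite inE big1 // => i _; rewrite ffunE. Qed.

Lemma imset_W (u : Welt n m) : u \in W -> [set mulW u w | w in W] = W.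
Proof.
move=> uW; apply/eqP; rewrite eqEcard card_imset; last exact: mulW_inj.
rewrite leqnn andbT; apply/subsetP => x /imsetP [w wW ->]; exact: mulW_in.
Qed.

Lemma reindexW (u : Welt n m) (G : Welt n m -> rat) : u \in W ->
  (\sum_(w in W) G (mulW u w) = \sum_(w in W) G w)%R.
Proof.
move=> uW; rewrite -[in RHS](imset_W uW) big_imset //.
by move=> a b _ _; apply: mulW_inj.
Qed.

Lemma W_inv (v : Welt n m) : v \in W ->
  exists2 v', v' \in W & forall h, actA v' (actA v h) = h.
Proof.
move=> vW; have := idW_in; rewrite -{1}(imset_W vW) => /imsetP [v' v'W E].
exists v' => // h; apply: (@actA_inj n m hm v).
rewrite -[actA v (actA v' _)](actA_mul hm); move: E => <-; exact: actA_id.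
Qed.
Lemma cls_inv (D : {set Hy}) (u : Welt n m) : u \in W -> actL u (cls D) = cls D.
Proof.
move=> uW; apply/ffunP => T; rewrite actLE.
under eq_bigr => S _ do rewrite clsE big_distrl /=.
rewrite exchange_big /=.
under eq_bigr => w _ do rewrite collapse.
rewrite clsE -(reindexW (fun w => if T == actA w @: D then eps w D else 0%R) uW).
apply: eq_bigr => w _; rewrite imset_mul eps_mul.
by case: ifP => _ //; rewrite mulr0.
Qed.

Lemma inv_rel (f : Lam n m) (u : Welt n m) (S : {set Hy}) :
  actL u f = f -> f (actA u @: S) = (f S * eps u S)%R.
Proof. by move=> E; rewrite -{1}E actL_img. Qed.

Lemma noninv_zero (f : Lam n m) T : (forall u, u \in W -> actL u f = f) ->
  ~~ invariantG T -> f T = 0%R.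
Proof.
move=> fW /forallPn [w]; rewrite negb_imply => /andP [wW].
rewrite negb_imply negbK => /andP [/eqP E hodd].
have h := inv_rel T (fW w wW); rewrite E /eps -signr_odd hodd expr1 in h.
lra.
Qed.

Lemma orbit_of_cls (D T : {set Hy}) : cls D T != 0%R ->
  exists2 w, w \in W & actA w @: D = T.
Proof.
rewrite clsE => H.
case: (pickP [pred w | (w \in W) && (T == actA w @: D)]) => [w /andP[wW /eqP ->]|none].
  by exists w.
move: H; rewrite big1 ?eqxx // => w wW; have := none w; rewrite /= wW /=.
by move=> ->.
Qed.

Lemma clsDD_gt0 (D : {set Hy}) : invariantG D -> (0 < cls D D)%R.
Proof.
move=> hD; rewrite clsE (bigD1 (@idW n m hm)); last exact: idW_in.
have E1 : actA (@idW n m hm) @: D = D.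
  by rewrite (eq_imset _ (@actA_id n m hm)) imset_id.
rewrite E1 eqxx (eps_inv hD idW_in E1).
have : (0 <= \sum_(i in W | i != @idW n m hm) (if D == actA i @: D then eps i D else 0))%R.
  apply: sumr_ge0 => w /andP [wW _]; case: eqP => [E|_]; last exact: Order.POrderTheory.lexx.
  rewrite (eps_inv hD wW (esym E)); exact: ler01.
move=> h; apply: (@Order.POrderTheory.lt_le_trans _ _ 1%R); first exact: ltr01.
by rewrite lerDl.
Qed.

Lemma main_sec (R : {set {set Hy}}) :
  (forall D, D \in R -> @invariantG n d e D) ->
  (forall D, @invariantG n d e D ->
     exists2 D', D' \in R & exists2 w, w \in W & actA w @: D' = D) ->
  (forall D1 D2, D1 \in R -> D2 \in R ->
     (exists2 w, w \in W & actA w @: D1 = D2) -> D1 = D2) ->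
  [/\ (forall D, D \in R -> exists T, @cls n d e D T != 0%R),
      (forall D, D \in R -> forall T : {set Hy}, #|T| != #|D| -> @cls n d e D T = 0%R),
      (forall D, D \in R -> forall w, w \in W -> actL w (@cls n d e D) = @cls n d e D),
      (forall c : {set Hy} -> rat,
         (forall T, (\sum_(D in R) c D * @cls n d e D T)%R = 0%R) ->
         forall D, D \in R -> c D = 0%R) &
      (forall f : Lam n m, (forall w, w \in W -> actL w f = f) ->
         exists c : {set Hy} -> rat,
           forall T, f T = (\sum_(D in R) c D * @cls n d e D T)%R)].
Proof.
move=> hR1 hR2 hR3; split.
- move=> D DR; exists D; by rewrite Order.POrderTheory.gt_eqF // clsDD_gt0 // hR1.
- move=> D DR T hT; rewrite clsE big1 // => w wW; case: eqP => // E.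
  by move: hT; rewrite E card_imset ?eqxx //; exact: actA_inj.
- by move=> D _ w wW; apply: cls_inv.
- move=> c hc D0 D0R; have := hc D0.
  rewrite (bigD1 D0) //= big1 ?addr0 => [/eqP|D /andP[DR ne]].
    rewrite mulf_eq0 => /orP [/eqP //|].
    by rewrite Order.POrderTheory.gt_eqF // clsDD_gt0 // hR1.
  case: (eqVneq (cls D D0) 0%R) => [->|nz]; first by rewrite mulr0.
  have [w wW E] := orbit_of_cls nz.
  by move: ne; rewrite (hR3 D D0 DR D0R (ex_intro2 _ _ w wW E)) eqxx.
- move=> f fW; exists (fun D => f D / cls D D)%R => T.
  case: (boolP (invariantG T)) => hT.
  + have [D0 D0R [v vW E]] := hR2 T hT.
    rewrite (bigD1 D0) //= big1 ?addr0.
    * rewrite -E (inv_rel D0 (fW v vW)) (inv_rel D0 (cls_inv D0 vW)).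
      have nz : cls D0 D0 != 0%R by rewrite Order.POrderTheory.gt_eqF // clsDD_gt0 // hR1.
      by rewrite mulrA divfK.
    * move=> D /andP[DR ne].
      case: (eqVneq (cls D T) 0%R) => [->|nz]; first by rewrite mulr0.
      have [w wW E'] := orbit_of_cls nz.
      have [v' v'W hv'] := W_inv vW.
      suff : D = D0 by move=> DD; rewrite DD eqxx in ne.
      apply: hR3 => //; exists (mulW v' w); first exact: mulW_in.
      rewrite imset_mul E' -E -imset_comp (eq_imset _ hv').
      exact: imset_id.
  + rewrite (noninv_zero fW hT) big1 // => D DR.
    by rewrite (noninv_zero (fun u uW => cls_inv D uW) hT) mulr0.
Qed.
End Main.

Unset Implicit Arguments.

Theorem theorem3p18 (d e n : nat) (hd : (1 < d)%N) (he : (0 < e)%N) (hn : (0 < n)%N)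
  (R : {set {set Hyp n (d * e)}}) :
  (* R is a set of representatives of the W-orbits of invariant multigraphs *)
  (forall D, D \in R -> @invariantG n d e D) ->
  (forall D, @invariantG n d e D ->
     exists2 D', D' \in R & exists2 w, w \in Wset n d e & actA w @: D' = D) ->
  (forall D1 D2, D1 \in R -> D2 \in R ->
     (exists2 w, w \in Wset n d e & actA w @: D1 = D2) -> D1 = D2) ->
  [/\ (forall D, D \in R -> exists T, @cls n d e D T != 0%R),
      (forall D, D \in R -> forall T : {set Hyp n (d * e)}, #|T| != #|D| -> @cls n d e D T = 0%R),
      (forall D, D \in R -> forall w, w \in Wset n d e -> actL w (@cls n d e D) = @cls n d e D),
      (forall c : {set Hyp n (d * e)} -> rat,
         (forall T, (\sum_(D in R) c D * @cls n d e D T)%R = 0%R) ->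
         forall D, D \in R -> c D = 0%R) &
      (forall f : Lam n (d * e), (forall w, w \in Wset n d e -> actL w f = f) ->
         exists c : {set Hyp n (d * e)} -> rat,
           forall T, f T = (\sum_(D in R) c D * @cls n d e D T)%R)].
Proof.
have hm : 1 < d * e by apply: leq_trans hd _; rewrite leq_pmulr.
exact: (main_sec hm hn).
Qed.
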